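(* Let $K,N\in\mathbb{N}$ with $N\ge2K$, and suppose $\|\nabla f(w;z)\|\le G$ for all $w\in\mathcal{K}$, $z\in\Omega$. Then for every $\delta>N\,d_{\mathrm{mix}}(K)$ and every $w_t\in\mathcal{K}$ that is $\mathcal{F}_{t-1}$-measurable, \[ \mathbb{P}_{t-1}\Big(\Big\|\frac1N\sum_{i=1}^N\nabla f(w_t;z_t^{(i)})-\nabla F(w_t)\Big\|\le12G\sqrt{\tfrac KN}\Big(1+\sqrt{\log(K/\tilde\delta)}\Big)+\frac{6GK}{N}\Big)\ge1-\delta, \] where $\tilde\delta=\delta-N\,d_{\mathrm{mix}}(K)$.
   Context: Let $\Omega$ be a finite set and $(z_k)_{k\ge1}$ an ergodic time-homogeneous Markov chain on $\Omega$ (arbitrary, not necessarily stationary, initial distribution) with stationary distribution $\mu$. For probability measures $P,Q$ on $\Omega$, $\|P-Q\|_{TV}=\sup_A|P(A)-Q(A)|$; $P^s(z,\cdot)$ is the law of $z_{s+1}$ given $z_1=z$, and $d_{\mathrm{mix}}(s)=\sup_z\|P^s(z,\cdot)-\mu\|_{TV}$. $\mathcal{K}\subseteq\mathbb{R}^d$; $f(\cdot;z)$ is differentiable and $F(w)=\mathbb{E}_{z\sim\mu}[f(w;z)]$. Samples are grouped by iterations: positive integers $N_1,N_2,\dots$ are drawn independently of the chain (each $N_s=2^{J_s}$ with $\mathbb{P}(J_s=j)=2^{-j}$, $j\ge1$, independently), and $z_t^{(i)}=z_{S_{t-1}+i}$ for $i\ge1$, where $S_{t-1}=N_1+\dots+N_{t-1}$.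 $\mathcal{F}_{t-1}$ is the $\sigma$-field generated by $N_1,\dots,N_{t-1}$ and the samples $z_s^{(i)}$, $s\le t-1$, $i\le N_s$; $\mathbb{P}_{t-1}$ is conditional probability given $\mathcal{F}_{t-1}$. $\log$ is the natural logarithm. *)

(* Defs.v *)
From HB Require Import structures.
From mathcomp Require Import all_boot all_order all_algebra.
From mathcomp Require Import all_classical all_reals all_analysis.
Set Implicit Arguments. Unset Strict Implicit. Unset Printing Implicit Defensive.
Import Order.TTheory GRing.Theory Num.Theory.
Import numFieldNormedType.Exports.
Local Open Scope ring_scope.

Section Defs.
Variable R : realType.
Variable Omega : finType.

(* transition kernel P : Omega -> Omega -> R ; P x y = P(z_{k+1} = y | z_k = x) *)
Definition is_distr (p : Omega -> R) :=
  (forall x, 0 <= p x) /\ \sum_x p x = 1.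

Definition stochastic (P : Omega -> Omega -> R) :=
  forall x, is_distr (P x).

Fixpoint Ppow (P : Omega -> Omega -> R) (s : nat) : Omega -> Omega -> R :=
  match s with
  | 0 => fun x y => (x == y)%:R
  | s'.+1 => fun x y => \sum_u Ppow P s' x u * P u y
  end.

Definition irreducible (P : Omega -> Omega -> R) :=
  forall x y, exists k, 0 < Ppow P k x y.

Definition aperiodic (P : Omega -> Omega -> R) :=
  forall x (d : nat), (forall k, (0 < k)%N -> 0 < Ppow P k x x -> (d %| k)%N) -> d = 1%N.

Definition ergodic (P : Omega -> Omega -> R) := irreducible P /\ aperiodic P.

Definition stationary (P : Omega -> Omega -> R) (mu : Omega -> R) :=
  is_distr mu /\ forall y, \sum_x mu x * P x y = mu y.

Definition tv (p q : Omega -> R) : R :=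
  \big[Num.max/0]_(A : {set Omega}) `|\sum_(x in A) p x - \sum_(x in A) q x|.

Definition dmix (P : Omega -> Omega -> R) (mu : Omega -> R) (s : nat) : R :=
  \big[Num.max/0]_(z : Omega) tv (Ppow P s z) mu.

Fixpoint path_aux (P : Omega -> Omega -> R) (z : Omega) (s : seq Omega) : R :=
  match s with
  | [::] => 1
  | z' :: s' => P z z' * path_aux P z' s'
  end.

Definition path_prob (mu0 : Omega -> R) (P : Omega -> Omega -> R) (s : seq Omega) : R :=
  match s with
  | [::] => 1
  | z :: s' => mu0 z * path_aux P z s'
  end.

End Defs.

(* law of N_s = 2^{J_s}, P(J_s = j) = 2^{-j}, j >= 1: P(N_s = n) = 1/n if n = 2^j, j >= 1 *)
Definition is_pow2 (n : nat) : bool := [exists j : 'I_n.+1, (0 < j)%N && (n == 2 ^ j)%N].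

Definition pN (R : realType) (n : nat) : R := if is_pow2 n then n%:R^-1 else 0.

Definition pNs (R : realType) (ns : seq nat) : R := \prod_(n <- ns) pN R n.

Definition eucl_norm (R : realType) (d : nat) (v : 'rV[R]_d) : R :=
  Num.sqrt (\sum_(i < d) v ord0 i ^+ 2).

Definition dotp (R : realType) (d : nat) (u v : 'rV[R]_d) : R :=
  \sum_(i < d) u ord0 i * v ord0 i.

Definition Fpop (R : realType) (Omega : finType) (d : nat)
  (mu : Omega -> R) (f : Omega -> 'rV[R]_d -> R) : 'rV[R]_d -> R :=
  fun w => \sum_z mu z * f z w.

(* Conditional probability P_{t-1}(A) on the atom of F_{t-1} given by
   N_1..N_{t-1} = ns and (z_1, ..., z_{S_{t-1}}) = xs; the event A depends on
   the next N samples (z_t^{(1)}, ..., z_t^{(N)}) = y. *)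
Definition condP (R : realType) (Omega : finType) (mu0 : Omega -> R)
  (P : Omega -> Omega -> R) (ns : seq nat) (xs : seq Omega) (N : nat)
  (A : N.-tuple Omega -> bool) : R :=
  (pNs R ns * \sum_(y : N.-tuple Omega | A y) path_prob mu0 P (xs ++ y))
  / (pNs R ns * path_prob mu0 P xs).

(* Main.v *)
Require Import Defs.
From HB Require Import structures.
From mathcomp Require Import all_boot all_order all_algebra.
From mathcomp Require Import all_classical all_reals all_analysis.
From mathcomp Require Import ring lra zify.
Import Order.TTheory GRing.Theory Num.Theory.
Import numFieldNormedType.Exports.
Local Open Scope ring_scope.


Lemma diff_sum_seq (R : realType) (Omega : eqType) (d : nat) (mu : Omega -> R)
  (f : Omega -> 'rV[R]_d -> R) (x : 'rV[R]_d) (l : seq Omega) :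
  (forall z, differentiable (f z) x) ->
  differentiable (fun w => \sum_(z <- l) mu z * f z w) x /\
  forall v, 'd (fun w => \sum_(z <- l) mu z * f z w) x v =
            \sum_(z <- l) mu z * 'd (f z) x v.
Proof.
move=> df; elim: l => [|a l [IHd IHe]].
  have -> : (fun w : 'rV[R]_d => \sum_(z <- [::]) mu z * f z w) = cst 0.
    by apply/funext => w; rewrite big_nil.
  split; first exact: differentiable_cst.
  by move=> v; rewrite diff_cst big_nil.
have -> : (fun w => \sum_(z <- a :: l) mu z * f z w) =
   (mu a *: f a) + (fun w => \sum_(z <- l) mu z * f z w).
  by apply/funext => w; rewrite big_cons.
split.
  apply: differentiableD => //; exact: differentiableZ.
move=> v; rewrite diffD //; last exact: differentiableZ.
by rewrite /= diffZ // big_cons IHe.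
Qed.

Set Implicit Arguments. Unset Strict Implicit. Unset Printing Implicit Defensive.

Section SumSeq.
Variable R : realType.
Variable T : finType.

Fixpoint sumseq (n : nat) (F : seq T -> R) : R :=
  match n with
  | 0 => F [::]
  | n'.+1 => \sum_x sumseq n' (fun s => F (x :: s))
  end.

Lemma sumseq_ext n F G : (forall s, size s = n -> F s = G s) ->
  sumseq n F = sumseq n G.
Proof.
elim: n F G => [|n IH] F G H /=; first by apply: H.
by apply: eq_bigr => x _; apply: IH => s Hs; apply: H; rewrite /= Hs.
Qed.

Lemma sumseq_le n F G : (forall s, size s = n -> F s <= G s) ->
  sumseq n F <= sumseq n G.
Proof.
elim: n F G => [|n IH] F G H /=; first by apply: H.
by apply: ler_sum => x _; apply: IH => s Hs; apply: H; rewrite /= Hs.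
Qed.

Lemma sumseqD n F G : sumseq n (fun s => F s + G s) = sumseq n F + sumseq n G.
Proof.
elim: n F G => [|n IH] F G //=; rewrite -big_split; apply: eq_bigr => x _; exact: IH.
Qed.

Lemma sumseqZ n c F : sumseq n (fun s => c * F s) = c * sumseq n F.
Proof.
elim: n F => [|n IH] F //=; rewrite mulr_sumr; apply: eq_bigr => x _; exact: IH.
Qed.

Lemma sumseq_cat m n F :
  sumseq (m + n) F = sumseq m (fun a => sumseq n (fun b => F (a ++ b))).
Proof.
elim: m F => [|m IH] F //=.
by apply: eq_bigr => x _; rewrite IH.
Qed.

Lemma sumseq1 F : sumseq 1 F = \sum_x F [:: x].
Proof. by []. Qed.

Lemma sumseq_tuple n (F : seq T -> R) : \sum_(t : n.-tuple T) F t = sumseq n F.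
Proof.
elim: n F => [|n IH] F /=.
  rewrite (big_pred1 [tuple]) //= => t; apply/esym/eqP/val_inj.
  by rewrite /= (size0nil (size_tuple t)).
rewrite (reindex (fun p : T * n.-tuple T => [tuple of p.1 :: p.2])) /=.
  rewrite -(pair_bigA _ (fun x (t : n.-tuple T) => F (x :: t))) /=.
  by apply: eq_bigr => x _; rewrite -IH.
exists (fun t : n.+1.-tuple T => (thead t, [tuple of behead t])).
  by move=> [x t] _ /=; congr (_, _); apply: val_inj.
by move=> t _; apply: val_inj => /=; rewrite [in RHS](tuple_eta t).
Qed.

End SumSeq.


Section Paths.
Variable R : realType.
Variable T : finType.
Variable P : T -> T -> R.
Hypothesis HP : stochastic P.

Lemma path_aux_cat z p q :
  path_aux P z (p ++ q) = path_aux P z p * path_aux P (last z p) q.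
Proof. by elim: p z => [|x p IH] z /=; rewrite ?mul1r // IH mulrA. Qed.

Lemma path_aux_ge0 z p : 0 <= path_aux P z p.
Proof. elim: p z => [|x p IH] z /=; first by []. by rewrite mulr_ge0 //; case: (HP z). Qed.

Lemma Ppow_ge0 n x y : 0 <= Ppow P n x y.
Proof.
elim: n y => [|n IH] y /=; first by rewrite ler0n.
by apply: sumr_ge0 => u _; rewrite mulr_ge0 //; case: (HP u).
Qed.

Lemma Ppow_sum1 n x : \sum_y Ppow P n x y = 1.
Proof.
elim: n => [|n IH] /=.
  by rewrite (bigD1 x) //= eqxx big1 ?addr0 // => y /negbTE; rewrite eq_sym => ->.
rewrite exchange_big /= -IH; apply: eq_bigr => u _.
by rewrite -mulr_sumr; case: (HP u) => _ ->; rewrite mulr1.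
Qed.

Lemma sumseq_path_last n z (h : T -> R) :
  sumseq n (fun s => path_aux P z s * h (last z s)) = \sum_y Ppow P n z y * h y.
Proof.
elim: n h => [|n IH] h.
  rewrite /= mul1r (bigD1 z) //= eqxx mul1r big1 ?addr0 // => y /negbTE.
  by rewrite eq_sym => ->; rewrite mul0r.
rewrite -addn1 sumseq_cat.
rewrite (sumseq_ext (G := fun a => path_aux P z a *
    (fun u => \sum_x P u x * h x) (last z a))); last first.
  move=> a _; rewrite sumseq1 mulr_sumr; apply: eq_bigr => x _.
  by rewrite path_aux_cat cats1 last_rcons /= mulr1 mulrA.
rewrite (IH (fun u => \sum_x P u x * h x)) addn1 /=.
under [RHS]eq_bigr do rewrite mulr_suml.
rewrite exchange_big /=; apply: eq_bigr => u _; rewrite mulr_sumr.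
by apply: eq_bigr => x _; rewrite mulrA.
Qed.

Lemma sumseq_path1 n z : sumseq n (fun s => path_aux P z s) = 1.
Proof.
have := sumseq_path_last n z (fun _ => 1).
under eq_bigr do rewrite mulr1.
rewrite Ppow_sum1 => <-; apply: sumseq_ext => s _; by rewrite mulr1.
Qed.

Definition chainE (Q : T -> T -> R) n z (H : seq T -> R) :=
  sumseq n (fun zs => path_aux Q z zs * H zs).

Lemma chainE_S Q n z H : chainE Q n.+1 z H =
  \sum_y Q z y * chainE Q n y (fun zs => H (y :: zs)).
Proof.
rewrite /chainE /=; apply: eq_bigr => y _; rewrite -sumseqZ.
by apply: sumseq_ext => s _; rewrite mulrA.
Qed.

Fixpoint subK (K : nat) (z : T) (n : nat) (q : seq T) : seq T :=
  match n with
  | 0 => [::]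
  | n'.+1 => let y := last z (take K q) in y :: subK K y n' (drop K q)
  end.

Lemma subsample K n t z H :
  sumseq (n * K + t) (fun q => path_aux P z q * H (subK K z n q)) =
  chainE (Ppow P K) n z H.
Proof.
elim: n z H => [|n IH] z H.
  rewrite mul0n add0n /chainE /= mul1r.
  rewrite (sumseq_ext (G := fun q => H [::] * path_aux P z q)).
    by rewrite sumseqZ sumseq_path1 ?mulr1.
  by move=> s _; rewrite mulrC.
rewrite mulSn -addnA sumseq_cat chainE_S.
rewrite -(sumseq_path_last _ _ (fun y => chainE (Ppow P K) n y (fun zs => H (y :: zs)))).
apply: sumseq_ext => a Ha; rewrite -IH -sumseqZ; apply: sumseq_ext => b _ /=.
by rewrite take_size_cat // drop_size_cat // path_aux_cat mulrA.
Qed.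

Definition sublist K p0 n (s : seq T) :=
  match s with
  | [::] => [::]
  | x :: s' => let z := last x (take p0 s') in z :: subK K z n (drop p0 s')
  end.

Lemma full_sample (nu : T -> R) K p0 n t H :
  sumseq (p0 + (n * K + t)).+1 (fun s => path_prob nu P s * H (sublist K p0 n s)) =
  \sum_x nu x * \sum_y Ppow P p0 x y * chainE (Ppow P K) n y (fun zs => H (y :: zs)).
Proof.
rewrite /=; apply: eq_bigr => x _; rewrite sumseq_cat.
rewrite -(sumseq_path_last _ _ (fun y => chainE (Ppow P K) n y (fun zs => H (y :: zs)))).
rewrite -sumseqZ; apply: sumseq_ext => a Ha.
rewrite -(subsample _ _ t) -!sumseqZ; apply: sumseq_ext => b _ /=.
by rewrite take_size_cat // drop_size_cat // path_aux_cat !mulrA.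
Qed.

Lemma path_prob_sum1 (nu : T -> R) n : is_distr nu ->
  sumseq n.+1 (fun s => path_prob nu P s) = 1.
Proof.
move=> [_ Hnu] /=; rewrite -Hnu; apply: eq_bigr => x _.
by rewrite sumseqZ sumseq_path1 mulr1.
Qed.

End Paths.


Section Vec.
Variable R : realType.
Variable d : nat.
Implicit Types u v : 'rV[R]_d.

Definition sqn v := \sum_(i < d) v ord0 i ^+ 2.

Lemma sqn_ge0 v : 0 <= sqn v.
Proof. by apply: sumr_ge0 => i _; rewrite sqr_ge0. Qed.

Lemma enorm_ge0 v : 0 <= eucl_norm v.
Proof. exact: sqrtr_ge0. Qed.

Lemma enorm_sq v : eucl_norm v ^+ 2 = sqn v.
Proof. by rewrite /eucl_norm sqr_sqrtr // sqn_ge0. Qed.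

Lemma dotpC u v : dotp u v = dotp v u.
Proof. by apply: eq_bigr => i _; rewrite mulrC. Qed.

Lemma sqnD u v : sqn (u + v) = sqn u + 2 * dotp u v + sqn v.
Proof.
rewrite /sqn /dotp mulr_sumr -!big_split /=; apply: eq_bigr => i _.
by rewrite mxE; ring.
Qed.

Lemma sqn0_dotp u v : sqn u = 0 -> dotp u v = 0.
Proof.
move=> /eqP; rewrite psumr_eq0 => [/allP H|i _]; last by rewrite sqr_ge0.
apply: big1 => i _.
have : u ord0 i ^+ 2 == 0 by apply: (implyP (H i (mem_index_enum _))).
by rewrite sqrf_eq0 => /eqP ->; rewrite mul0r.
Qed.

Lemma cauchy_schwarz u v : dotp u v <= eucl_norm u * eucl_norm v.
Proof.
set a := eucl_norm u; set b := eucl_norm v.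
have a0 : 0 <= a by exact: enorm_ge0.
have b0 : 0 <= b by exact: enorm_ge0.
have H : 0 <= \sum_(i < d) (b * u ord0 i - a * v ord0 i) ^+ 2.
  by apply: sumr_ge0 => i _; rewrite sqr_ge0.
have E : \sum_(i < d) (b * u ord0 i - a * v ord0 i) ^+ 2 =
    2 * (a * b) * (a * b - dotp u v).
  have -> : \sum_(i < d) (b * u ord0 i - a * v ord0 i) ^+ 2 =
     b ^+ 2 * sqn u - 2 * a * b * dotp u v + a ^+ 2 * sqn v.
    rewrite /sqn /dotp !mulr_sumr -sumrN -!big_split /=; apply: eq_bigr => i _.
    by rewrite sqrrB; ring.
  rewrite -/(eucl_norm u) -/(eucl_norm v) -!enorm_sq -/a -/b; ring.
have [ab0|ab0] := eqVneq (a * b) 0.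
  move: ab0 => /eqP; rewrite mulf_eq0 => /orP [] /eqP.
    move=> /(congr1 (fun x => x ^+ 2)); rewrite enorm_sq expr0n /= => /sqn0_dotp ->.
    by rewrite mulr_ge0.
  move=> /(congr1 (fun x => x ^+ 2)); rewrite enorm_sq expr0n /= => /sqn0_dotp.
  by rewrite dotpC => ->; rewrite mulr_ge0.
have abp : 0 < a * b by rewrite lt0r ab0 mulr_ge0.
have h2 : 0 < 2 * (a * b) by rewrite mulr_gt0.
by move: H; rewrite E pmulr_rge0 // subr_ge0.
Qed.

Lemma dotpNl u v : dotp (- u) v = - dotp u v.
Proof. by rewrite /dotp -sumrN; apply: eq_bigr => i _; rewrite mxE mulNr. Qed.

Lemma sqnN v : sqn (- v) = sqn v.
Proof. by apply: eq_bigr => i _; rewrite mxE sqrrN. Qed.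

Lemma enormN v : eucl_norm (- v) = eucl_norm v.
Proof. by rewrite /eucl_norm -/(sqn _) sqnN. Qed.

Lemma abs_dotp u v : `|dotp u v| <= eucl_norm u * eucl_norm v.
Proof.
rewrite ler_norml cauchy_schwarz andbT lerNl -dotpNl.
by rewrite -(enormN u) cauchy_schwarz.
Qed.

Lemma enormD u v : eucl_norm (u + v) <= eucl_norm u + eucl_norm v.
Proof.
rewrite -(ler_pXn2r (n := 2)) ?nnegrE ?addr_ge0 ?enorm_ge0 //.
rewrite enorm_sq sqnD sqrrD !enorm_sq lerD2r lerD2l -mulr_natl -mulrA.
by move: (cauchy_schwarz u v); rewrite mul1r; nra.
Qed.

Lemma sqnZ c v : sqn (c *: v) = c ^+ 2 * sqn v.
Proof. by rewrite /sqn mulr_sumr; apply: eq_bigr => i _; rewrite mxE exprMn. Qed.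

Lemma enormZ c v : eucl_norm (c *: v) = `|c| * eucl_norm v.
Proof. by rewrite /eucl_norm -!/(sqn _) sqnZ sqrtrM ?sqr_ge0 // sqrtr_sqr. Qed.

Lemma enorm0 : eucl_norm (0 : 'rV[R]_d) = 0.
Proof. by rewrite /eucl_norm big1 ?sqrtr0 // => i _; rewrite mxE expr0n. Qed.

Lemma enorm_sum (I : Type) (r : seq I) (Pr : pred I) (F : I -> 'rV[R]_d) :
  eucl_norm (\sum_(i <- r | Pr i) F i) <= \sum_(i <- r | Pr i) eucl_norm (F i).
Proof.
apply: (big_ind2 (fun x y => eucl_norm x <= y)); first by rewrite enorm0.
  by move=> x1 x2 y1 y2 h1 h2; apply: le_trans (enormD _ _) (lerD h1 h2).
by [].
Qed.

Lemma dotp_sumr (T : finType) (p : T -> R) u (V : T -> 'rV[R]_d) :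
  dotp u (\sum_z p z *: V z) = \sum_z p z * dotp u (V z).
Proof.
rewrite /dotp; under [RHS]eq_bigr do rewrite mulr_sumr.
rewrite exchange_big /=; apply: eq_bigr => i _.
rewrite summxE mulr_sumr; apply: eq_bigr => z _.
by rewrite mxE; ring.
Qed.

Lemma dotp0r u : dotp u 0 = 0.
Proof. by apply: big1 => i _; rewrite mxE mulr0. Qed.

End Vec.


Section OneStep.
Variable R : realType.
Variable d : nat.

Lemma exp_upper (y : R) : y <= 1 / 2 -> expR y <= 1 + y + 2 * y ^+ 2.
Proof.
move=> hy.
have h1 : 1 - y <= expR (- y) by have := expR_ge1Dx (- y).
have p1 : 0 < 1 - y by lra.
have -> : expR y = (expR (- y))^-1 by rewrite expRN invrK.
apply: (le_trans (y := (1 - y)^-1)).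
  by rewrite lef_pV2 ?posrE ?expR_gt0.
rewrite -[(1 - y)^-1]mul1r ler_pdivrMr //.
have h2 : 0 <= y ^+ 2 * (1 - 2 * y) by rewrite mulr_ge0 ?sqr_ge0 //; lra.
nra.
Qed.

Lemma one_step (T : finType) (p : T -> R) (V : T -> 'rV[R]_d) U a c :
  (forall z, 0 <= p z) -> \sum_z p z = 1 -> \sum_z p z *: V z = 0 ->
  (forall z, eucl_norm (V z) <= c) -> 0 <= a -> 0 <= c ->
  4 * a * eucl_norm U * c <= 1 ->
  \sum_z p z * expR (a * sqn (U + V z)) <=
  expR ((a + 8 * a ^+ 2 * c ^+ 2) * sqn U + a * c ^+ 2).
Proof.
move=> p0 p1 pV Vc a0 c0 Hb.
set A := a * sqn U + a * c ^+ 2.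
set b := 2 * a * eucl_norm U * c.
set y := fun z => 2 * a * dotp U (V z).
have nU0 := enorm_ge0 U.
have b0 : 0 <= b by rewrite /b !mulr_ge0.
have bh : b <= 1 / 2.
  have -> : b = (4 * a * eucl_norm U * c) / 2 by rewrite /b; field.
  by rewrite ler_pM2r.
have Hy : forall z, `|y z| <= b.
  move=> z; rewrite /y /b normrM ger0_norm ?mulr_ge0 // -!mulrA ler_wpM2l //.
  rewrite ler_wpM2l //; apply: le_trans (abs_dotp _ _) _.
  by rewrite ler_wpM2l // enorm_ge0.
have Hz : forall z, expR (a * sqn (U + V z)) <= expR A * (1 + y z + 2 * b ^+ 2).
  move=> z; rewrite sqnD.
  have -> : a * (sqn U + 2 * dotp U (V z) + sqn (V z)) =
     (a * sqn U + a * sqn (V z)) + y z by rewrite /y; ring.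
  rewrite expRD; apply: ler_pM; rewrite ?expR_ge0 //.
    rewrite ler_expR lerD2l ler_wpM2l // -enorm_sq lerXn2r ?nnegrE ?enorm_ge0 //.
  apply: le_trans (exp_upper _) _.
    have := Hy z; rewrite ler_norml => /andP [_ h]; lra.
  rewrite lerD2l ler_wpM2l //.
  rewrite -(real_normK (num_real (y z))).
  by rewrite lerXn2r ?nnegrE ?normr_ge0.
have Hy0 : \sum_z p z * y z = 0.
  rewrite /y; under eq_bigr do rewrite mulrCA.
  by rewrite -mulr_sumr -dotp_sumr pV dotp0r mulr0.
apply: (le_trans (y := \sum_z p z * (expR A * (1 + y z + 2 * b ^+ 2)))).
  by apply: ler_sum => z _; apply: ler_wpM2l.
have -> : \sum_z p z * (expR A * (1 + y z + 2 * b ^+ 2)) =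
    expR A * ((1 + 2 * b ^+ 2) * \sum_z p z + \sum_z p z * y z).
  transitivity (\sum_z (expR A * (1 + 2 * b ^+ 2) * p z + expR A * (p z * y z))).
    by apply: eq_bigr => z _; ring.
  by rewrite big_split /= -!mulr_sumr; ring.
rewrite Hy0 p1 addr0 mulr1.
apply: (le_trans (y := expR A * expR (2 * b ^+ 2))).
  by rewrite ler_wpM2l ?expR_ge0 // expR_ge1Dx.
rewrite -expRD /A /b ler_expR exprMn exprMn exprMn enorm_sq.
have h : 0 <= a ^+ 2 * c ^+ 2 * sqn U by rewrite !mulr_ge0 ?sqr_ge0 ?sqn_ge0.
nra.
Qed.

End OneStep.

Section ChainExp.
Variable R : realType.
Variable T : finType.
Variable d : nat.
Variable Q : T -> T -> R.
Hypothesis HQ : stochastic Q.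
Variable g : T -> 'rV[R]_d.

Definition Qg z := \sum_y Q z y *: g y.
Definition Dv z y := g y - Qg z.
Fixpoint Mfun z zs := match zs with
  | [::] => 0
  | y :: zs' => Dv z y + Mfun y zs'
  end.

Lemma Dv_mean z : \sum_y Q z y *: Dv z y = 0.
Proof.
rewrite /Dv; under eq_bigr do rewrite scalerBr.
rewrite sumrB -scaler_suml; case: (HQ z) => _ ->.
by rewrite scale1r /Qg subrr.
Qed.

Lemma chain_exp lam c n0 :
  (forall z y, eucl_norm (Dv z y) <= c) -> 0 < lam -> 0 <= c -> 0 < n0 ->
  32 * lam * c ^+ 2 * n0 <= 1 ->
  forall n, n%:R <= n0 -> forall U z, eucl_norm U <= (n0 - n%:R) * c ->
  chainE Q n z (fun zs => expR (lam * sqn (U + Mfun z zs))) <=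
  expR ((lam + n%:R * lam / n0) * sqn U + 2 * lam * n%:R * c ^+ 2).
Proof.
move=> Hc lam0 c0 n00 Hl; elim => [|n IH] Hn U z HU.
  rewrite /chainE /= mul1r addr0.
  by rewrite !(mul0r, mulr0, addr0).
rewrite chainE_S.
have Hn' : n%:R <= n0 by apply: le_trans Hn; rewrite ler_nat.
set a := lam + n%:R * lam / n0.
have a0 : 0 <= a.
  have : 0 <= n%:R * lam / n0.
    by apply: divr_ge0; [apply: mulr_ge0; [apply: ler0n | apply: ltW] | apply: ltW].
  rewrite /a; lra.
have a2 : a <= 2 * lam.
  have : n%:R * lam / n0 <= lam.
    rewrite ler_pdivrMr // mulrC; apply: ler_wpM2l => //; exact: ltW.
  rewrite /a; lra.
have eS : n.+1%:R = n%:R + 1 :> R by rewrite -natr1.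
have Hc2 : 0 <= c ^+ 2 by rewrite sqr_ge0.
have nn0 : 0 <= n%:R :> R by rewrite ler0n.
have hU2 : eucl_norm U <= n0 * c.
  apply: le_trans HU _; rewrite ler_wpM2r // eS; lra.
apply: (le_trans (y := \sum_y Q z y *
   (expR (2 * lam * n%:R * c ^+ 2) * expR (a * sqn (U + Dv z y))))).
  apply: ler_sum => y _; apply: ler_wpM2l; first by case: (HQ z) => + _; apply.
  have E : (fun zs => expR (lam * sqn (U + Mfun z (y :: zs)))) =
           (fun zs => expR (lam * sqn ((U + Dv z y) + Mfun y zs))).
    by apply/funext => zs /=; rewrite addrA.
  rewrite E; apply: le_trans (IH Hn' (U + Dv z y) y _) _.
    apply: le_trans (enormD _ _) _; have := Hc z y; move: HU; rewrite eS; lra.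
  by rewrite -expRD addrC.
under eq_bigr do rewrite mulrCA.
rewrite -mulr_sumr.
have H4 : 4 * a * eucl_norm U * c <= 1.
  have h1 : 4 * a * eucl_norm U * c <= 4 * (2 * lam) * (n0 * c) * c.
    apply: ler_wpM2r => //; apply: ler_pM => //.
    - by rewrite mulr_ge0.
    - exact: enorm_ge0.
    - by apply: ler_wpM2l.
  apply: le_trans h1 _; nra.
apply: le_trans (ler_wpM2l (expR_ge0 _) (one_step _ _ _ _ _ _ H4)) _.
- by move=> y; case: (HQ z) => + _; apply.
- by case: (HQ z).
- exact: Dv_mean.
- exact: Hc z.
- exact: a0.
- exact: c0.
rewrite -expRD ler_expR.
have a2' : a ^+ 2 <= 4 * lam ^+ 2.
  have -> : 4 * lam ^+ 2 = (2 * lam) ^+ 2 by ring.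
  by rewrite lerXn2r ?nnegrE // mulr_ge0 // ltW.
have h32 : 32 * lam * c ^+ 2 <= n0^-1.
  by rewrite -[n0^-1]mul1r ler_pdivlMr.
have h8 : 8 * a ^+ 2 * c ^+ 2 <= lam / n0.
  apply: (le_trans (y := 8 * (4 * lam ^+ 2) * c ^+ 2)).
    by rewrite ler_wpM2r // ler_wpM2l.
  have -> : 8 * (4 * lam ^+ 2) * c ^+ 2 = lam * (32 * lam * c ^+ 2) by ring.
  by rewrite ler_wpM2l // ltW.
have t1 := ler_wpM2r (sqn_ge0 U) h8.
have t2 := ler_wpM2r Hc2 a2.
have -> : lam + n.+1%:R * lam / n0 = a + lam / n0 by rewrite /a eS; field; lra.
rewrite eS; lra.
Qed.

End ChainExp.


Lemma sum_blocks (V : zmodType) m K (G : nat -> V) :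
  \sum_(i < m * K) G i = \sum_(j < m) \sum_(r < K) G (j * K + r)%N.
Proof.
elim: m => [|m IH]; first by rewrite mul0n !big_ord0.
by rewrite big_ord_recr /= -IH mulSnr big_split_ord.
Qed.

Lemma sum_residues (V : zmodType) N K (F : nat -> V) : (0 < K)%N -> (K <= N)%N ->
  \sum_(i < N) F i =
  \sum_(r < K) \sum_(j < ((N.-1 - r) %/ K).+1) F (r + j * K)%N.
Proof.
move=> K0 KN.
rewrite (big_ord_widen (N * K) F); last by rewrite leq_pmulr.
rewrite big_mkcond (sum_blocks N K (fun i => if (i < N)%N then F i else 0)).
rewrite exchange_big /=; apply: eq_bigr => r _.
rewrite (big_ord_widen N (fun j => F (r + j * K)%N)); last first.
  have := leq_div (N.-1 - r) K; lia.
rewrite [RHS]big_mkcond; apply: eq_bigr => j _.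
have -> : (j < ((N.-1 - r) %/ K).+1)%N = (j * K + r < N)%N.
  rewrite ltnS leq_divRL //; have := ltn_ord r; lia.
by case: ifP => //; rewrite addnC.
Qed.

Lemma subK_nth (T : finType) K z n (q : seq T) x0 : (0 < K)%N -> (n * K <= size q)%N ->
  subK K z n q = [seq nth x0 q (j * K + K.-1) | j <- iota 0 n].
Proof.
move=> K0; elim: n z q => [|n IH] z q Hs //=.
have HK : (K <= size q)%N by move: Hs; rewrite mulSn; lia.
congr (_ :: _).
  rewrite (last_nth x0) size_take_min (minn_idPl HK).
  have -> : K = K.-1.+1 by lia.
  by rewrite /= nth_take.
rewrite (IH _ (drop K q)); last by rewrite size_drop; move: Hs; rewrite mulSn; lia.
rewrite -(addn0 1%N) iotaDl -map_comp; apply: eq_map => j /=.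
rewrite nth_drop; congr nth; lia.
Qed.

Lemma sublist_nth (T : finType) K p0 n (s : seq T) x0 : (0 < K)%N ->
  (p0 + n * K < size s)%N ->
  sublist K p0 n s = [seq nth x0 s (p0 + j * K) | j <- iota 0 n.+1].
Proof.
case: s => [|x s'] K0 //= Hs.
congr (_ :: _).
  rewrite (last_nth x0) size_take_min (minn_idPl _); last by lia.
  have -> : x :: take p0 s' = take p0.+1 (x :: s') by [].
  by rewrite nth_take // addn0.
rewrite (@subK_nth T K _ n (drop p0 s') x0) //; last by rewrite size_drop; lia.
rewrite -(addn0 1%N) iotaDl -map_comp; apply: eq_map => j /=.
rewrite nth_drop.
have -> : (p0 + (1 + j) * K)%N = (p0 + (j * K + K.-1)).+1 by rewrite mulSn; lia.
by [].
Qed.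


Section Aux.
Variable R : realType.
Variable T : finType.

Lemma l1_le_tv (p q : T -> R) : \sum_y p y = 1 -> \sum_y q y = 1 ->
  \sum_y `|p y - q y| <= 2 * tv p q.
Proof.
move=> p1 q1; set A := [set y | q y < p y].
rewrite (bigID (fun y => y \in A)) /=.
have E1 : \sum_(y | y \in A) `|p y - q y| = \sum_(y in A) (p y - q y).
  apply: eq_bigr => y; rewrite inE => h; rewrite ger0_norm // subr_ge0 ltW //.
have E2 : \sum_(y | y \notin A) `|p y - q y| = \sum_(y | y \notin A) (q y - p y).
  apply: eq_bigr => y; rewrite inE -leNgt => h.
  by rewrite ler0_norm ?subr_le0 // opprB.
have E3 : \sum_(y | y \notin A) (q y - p y) = \sum_(y in A) (p y - q y).
  have : \sum_y (p y - q y) = 0 by rewrite sumrB p1 q1 subrr.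
  rewrite (bigID (fun y => y \in A)) /= => /eqP; rewrite addr_eq0 => /eqP ->.
  by rewrite -sumrN; apply: eq_bigr => y _; rewrite opprB.
rewrite E1 E2 E3 sumrB.
have : `|\sum_(x in A) p x - \sum_(x in A) q x| <= tv p q.
  have := (le_bigmax 0 (fun A : {set T} => `|\sum_(x in A) p x - \sum_(x in A) q x|) A).
  rewrite /tv; exact.
move: (ler_norm (\sum_(x in A) p x - \sum_(x in A) q x)); lra.
Qed.

Lemma tv_ge0 (p q : T -> R) : 0 <= tv p q.
Proof.
have := le_bigmax 0 (fun A : {set T} => `|\sum_(x in A) p x - \sum_(x in A) q x|) finset.set0.
rewrite /tv; apply: le_trans; exact: normr_ge0.
Qed.

Lemma tv_le_dmix (P : T -> T -> R) mu s z : tv (Ppow P s z) mu <= dmix P mu s.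
Proof. by have := le_bigmax 0 (fun z => tv (Ppow P s z) mu) z; rewrite /dmix. Qed.

Lemma dmix_ge0 (P : T -> T -> R) mu s (z : T) : 0 <= dmix P mu s.
Proof. exact: le_trans (tv_ge0 _ _) (tv_le_dmix P mu s z). Qed.

Lemma sumseq_sum n m (F : 'I_m -> seq T -> R) :
  sumseq n (fun s => \sum_(r < m) F r s) = \sum_(r < m) sumseq n (F r).
Proof.
elim: n F => [|n IH] F //=.
under eq_bigr do rewrite IH.
by rewrite exchange_big.
Qed.

Lemma chainE_le (Q : T -> T -> R) n z H1 H2 : stochastic Q ->
  (forall zs, H1 zs <= H2 zs) -> chainE Q n z H1 <= chainE Q n z H2.
Proof.
move=> HQ H; apply: sumseq_le => s _; apply: ler_wpM2l => //.
exact: path_aux_ge0.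
Qed.

Lemma chainEZ (Q : T -> T -> R) n z a H :
  chainE Q n z (fun zs => a * H zs) = a * chainE Q n z H.
Proof. by rewrite /chainE -sumseqZ; apply: sumseq_ext => s _; rewrite mulrCA. Qed.

Lemma size_subK K z n (q : seq T) : size (subK K z n q) = n.
Proof. by elim: n z q => [|n IH] z q //=; rewrite IH. Qed.

Lemma enorm_comb d (p : T -> R) (V : T -> 'rV[R]_d) G :
  (forall z, eucl_norm (V z) <= G) ->
  eucl_norm (\sum_z p z *: V z) <= (\sum_z `|p z|) * G.
Proof.
move=> HV; apply: le_trans (enorm_sum _ _ _) _; rewrite mulr_suml.
apply: ler_sum => z _; rewrite enormZ ler_wpM2l //.
Qed.

End Aux.


Section Core.
Variable R : realType.
Variable T : finType.
Variable P : T -> T -> R.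
Hypothesis HP : stochastic P.
Variables nu mu : T -> R.
Hypothesis Hnu : is_distr nu.
Hypothesis Hmu : is_distr mu.
Variable d : nat.
Variable g : T -> 'rV[R]_d.
Variable G : R.
Hypothesis Hg : forall z, eucl_norm (g z) <= G.
Hypothesis G0 : 0 < G.
Variables K N : nat.
Hypothesis K1 : (1 <= K)%N.
Hypothesis KN : (2 * K <= N)%N.
Variable delta : R.
Hypothesis Hd : N%:R * dmix P mu K < delta.
Hypothesis Hd1 : delta < 1.
Variable z0 : T.

Definition gbar := \sum_z mu z *: g z.
Definition Q := Ppow P K.
Definition cc := 2 * G.
Definition kk : R := K%:R.
Definition nN : R := N%:R.
Definition n0 := nN / kk.
Definition lam := (32 * cc ^+ 2 * n0)^-1.
Definition L0 := ln (kk / delta).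
Definition thr := Num.sqrt (128 * G ^+ 2 * (nN / kk) * (L0 + 1 / 16)).
Definition dm := dmix P mu K.
Definition nr (r : nat) := ((N.-1 - r) %/ K)%N.
Definition Mof (l : seq T) := match l with z :: zs => Mfun Q g z zs | [::] => 0 end.
Definition Hr (r : nat) (s : seq T) : R := (thr < eucl_norm (Mof (sublist K r (nr r) s)))%R%:R.

Lemma kk_gt0 : 0 < kk. Proof. by rewrite /kk ltr0n. Qed.
Lemma nN_gt0 : 0 < nN. Proof. rewrite /nN ltr0n; lia. Qed.
Lemma kk_le_nN : kk <= nN. Proof. rewrite /kk /nN ler_nat; lia. Qed.
Lemma kk_ge1 : 1 <= kk. Proof. by rewrite /kk ler1n. Qed.
Lemma n0_gt0 : 0 < n0. Proof. by rewrite /n0 divr_gt0 ?nN_gt0 ?kk_gt0. Qed.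
Lemma cc_gt0 : 0 < cc. Proof. by rewrite /cc mulr_gt0. Qed.
Lemma lam_gt0 : 0 < lam.
Proof.
rewrite /lam invr_gt0; apply: mulr_gt0; last exact: n0_gt0.
apply: mulr_gt0 => //; apply: exprn_gt0; exact: cc_gt0.
Qed.
Lemma dm_ge0 : 0 <= dm. Proof. exact: dmix_ge0 z0. Qed.
Lemma delta_gt0 : 0 < delta.
Proof. apply: le_lt_trans Hd; apply: mulr_ge0; [exact: ler0n | exact: dm_ge0]. Qed.
Lemma L0_ge0 : 0 <= L0.
Proof.
rewrite /L0 ln_ge0 // ler_pdivlMr ?delta_gt0 // mul1r.
by apply: le_trans kk_ge1; apply: ltW.
Qed.

Lemma HQ : stochastic Q.
Proof. by move=> x; split; [move=> y; exact: Ppow_ge0 | exact: Ppow_sum1]. Qed.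

Lemma gbar_norm : eucl_norm gbar <= G.
Proof.
apply: le_trans (enorm_comb _ Hg) _.
case: Hmu => m0 m1.
by rewrite (eq_bigr _ (fun z _ => ger0_norm (m0 z))) m1 mul1r.
Qed.

Lemma Qg_norm z : eucl_norm (Qg Q g z) <= G.
Proof.
apply: le_trans (enorm_comb _ Hg) _.
case: (HQ z) => m0 m1.
by rewrite (eq_bigr _ (fun y _ => ger0_norm (m0 y))) m1 mul1r.
Qed.

Lemma Hc z y : eucl_norm (Dv Q g z y) <= cc.
Proof.
rewrite /Dv /cc; apply: le_trans (enormD _ _) _; rewrite enormN.
have := Hg y; have := Qg_norm z; lra.
Qed.

Lemma lam_t2 : lam * thr ^+ 2 = L0 + 1 / 16.
Proof.
have := L0_ge0; have := kk_gt0; have := nN_gt0 => hn hk hL.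
rewrite /thr sqr_sqrtr; last first.
  apply: mulr_ge0; last lra.
  apply: mulr_ge0; last by apply: divr_ge0; apply: ltW.
  by apply: mulr_ge0 => //; exact: sqr_ge0.
rewrite /lam /n0 /cc; field.
by rewrite -/kk -/nN !lt0r_neq0.
Qed.

Lemma tt_ge0 : 0 <= thr. Proof. exact: sqrtr_ge0. Qed.

Lemma nr_le r : (nr r)%:R <= n0.
Proof.
rewrite /n0 ler_pdivlMr ?kk_gt0 // /kk /nN -natrM ler_nat /nr.
have := leq_divM (N.-1 - r) K; lia.
Qed.

Lemma indicator_le (M : 'rV[R]_d) :
  (thr < eucl_norm M)%R%:R <= expR (- (lam * thr ^+ 2)) * expR (lam * sqn (0 + M)).
Proof.
rewrite add0r -expRD; case: ltP => h; last exact: expR_ge0.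
have h2 : thr ^+ 2 <= sqn M.
  rewrite -enorm_sq lerXn2r ?nnegrE ?tt_ge0 ?enorm_ge0 //; exact: ltW.
have h3 : 0 <= - (lam * thr ^+ 2) + lam * sqn M.
  rewrite addrC subr_ge0 ler_wpM2l // ltW //; exact: lam_gt0.
apply: le_trans (expR_ge1Dx _); rewrite /= ?mulr1n; lra.
Qed.

Lemma per_r (r : nat) : (r < K)%N ->
  sumseq N (fun s => path_prob nu P s * Hr r s) <= delta / kk.
Proof.
move=> rK.
set tr := (N.-1 - r - nr r * K)%N.
have EN : N = (r + (nr r * K + tr)).+1.
  rewrite /tr /nr; have := leq_divM (N.-1 - r) K; lia.
rewrite {1}EN /Hr.
rewrite (full_sample HP nu K r (nr r) tr (fun l => (thr < eucl_norm (Mof l))%R%:R)).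
have Hch : forall y, chainE Q (nr r) y (fun zs => (thr < eucl_norm (Mof (y :: zs)))%R%:R)
    <= delta / kk.
  move=> y.
  have step : chainE Q (nr r) y (fun zs => (thr < eucl_norm (Mof (y :: zs)))%R%:R) <=
      chainE Q (nr r) y (fun zs => expR (- (lam * thr ^+ 2)) *
        expR (lam * sqn (0 + Mfun Q g y zs))).
    apply: chainE_le; [exact: HQ | move=> zs; exact: indicator_le].
  apply: le_trans step _.
  rewrite chainEZ.
  apply: le_trans (ler_wpM2l (expR_ge0 _) (chain_exp HQ Hc lam_gt0 (ltW cc_gt0) n0_gt0 _ (nr_le r) y _)) _.
  - have h1 := n0_gt0; have h2 := cc_gt0.
    rewrite /lam le_eqVlt; apply/orP; left; apply/eqP; field.
    by rewrite !lt0r_neq0.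
  - rewrite enorm0 mulr_ge0 ?subr_ge0 ?nr_le //; exact: (ltW cc_gt0).
  rewrite /sqn big1 ?mulr0 ?add0r; last by move=> i _; rewrite mxE expr0n.
  rewrite -expRD lam_t2.
  have h1 : 2 * lam * (nr r)%:R * cc ^+ 2 <= 1 / 16.
    have -> : 1 / 16 = 2 * lam * n0 * cc ^+ 2.
      have hn := n0_gt0; have hc := cc_gt0.
      by rewrite /lam; field; rewrite !lt0r_neq0.
    apply: ler_wpM2r; first exact: sqr_ge0.
    apply: ler_wpM2l; last exact: nr_le.
    apply: mulr_ge0 => //; exact: (ltW lam_gt0).
  apply: le_trans (_ : expR (- L0) <= _).
    rewrite ler_expR; lra.
  rewrite expRN /L0 lnK ?invf_div //.
  by rewrite posrE divr_gt0 ?kk_gt0 ?delta_gt0.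
apply: le_trans (_ : \sum_x nu x * \sum_y Ppow P r x y * (delta / kk) <= _).
  apply: ler_sum => x _; apply: ler_wpM2l; first by case: Hnu.
  apply: ler_sum => y _; apply: ler_wpM2l; first exact: Ppow_ge0.
  exact: Hch.
under eq_bigr do rewrite -mulr_suml (Ppow_sum1 HP) mul1r.
by rewrite -mulr_suml; case: Hnu => _ ->; rewrite mul1r.
Qed.

Fixpoint Bfun (z : T) (zs : seq T) : 'rV[R]_d :=
  match zs with
  | [::] => 0
  | y :: zs' => (Qg Q g z - gbar) + Bfun y zs'
  end.

Lemma sum_decomp z zs :
  \sum_(y <- zs) (g y - gbar) = Mfun Q g z zs + Bfun z zs.
Proof.
elim: zs z => [|y zs IH] z /=; first by rewrite big_nil addr0.
rewrite big_cons (IH y) /Dv.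
by apply/matrixP => i j; rewrite !mxE; ring.
Qed.

Lemma Qg_bias z : eucl_norm (Qg Q g z - gbar) <= cc * dm.
Proof.
have -> : Qg Q g z - gbar = \sum_y (Q z y - mu y) *: g y.
  by rewrite /Qg /gbar -sumrB; apply: eq_bigr => y _; rewrite scalerBl.
apply: le_trans (enorm_comb _ Hg) _.
apply: le_trans (_ : 2 * tv (Q z) mu * G <= _).
  rewrite ler_wpM2r ?(le_trans _ (Hg z0)) ?enorm_ge0 //.
  apply: l1_le_tv; [by case: (HQ z) | by case: Hmu].
rewrite /cc mulrAC ler_wpM2l ?mulr_ge0 ?(ltW G0) //.
exact: tv_le_dmix.
Qed.

Lemma Bfun_norm z zs : eucl_norm (Bfun z zs) <= (size zs)%:R * (cc * dm).
Proof.
elim: zs z => [|y zs IH] z /=; first by rewrite enorm0 mul0r.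
apply: le_trans (enormD _ _) _.
have -> : (size zs).+1%:R = (size zs)%:R + 1 :> R by rewrite -natr1.
rewrite mulrDl mul1r addrC.
by apply: lerD; [exact: IH | exact: Qg_bias].
Qed.

Lemma determ s : size s = N ->
  (forall r : 'I_K, eucl_norm (Mof (sublist K r (nr r) s)) <= thr) ->
  eucl_norm (nN^-1 *: \sum_(i < N) g (nth z0 s i) - gbar) <=
  (kk * thr + 4 * G * kk) / nN.
Proof.
move=> Hs HM.
have hn := nN_gt0.
have E1 : nN^-1 *: \sum_(i < N) g (nth z0 s i) - gbar =
    nN^-1 *: \sum_(i < N) (g (nth z0 s i) - gbar).
  rewrite sumrB sumr_const card_ord scalerBr -scaler_nat scalerA mulVf ?scale1r //.
  exact: lt0r_neq0.
rewrite E1 enormZ ger0_norm ?invr_ge0 ?(ltW hn) // mulrC ler_pM2r ?invr_gt0 //.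
have KN' : (K <= N)%N by lia.
rewrite (sum_residues (fun i => g (nth z0 s i) - gbar) K1 KN').
apply: le_trans (enorm_sum _ _ _) _.
apply: le_trans (_ : \sum_(r < K) (2 * G + thr + (nr r)%:R * (cc * dm)) <= _).
  apply: ler_sum => r _.
  have Hr' : (r + nr r * K < size s)%N.
    rewrite Hs /nr; have := leq_divM (N.-1 - r) K; have := ltn_ord r; lia.
  have Eb : \sum_(j < (nr r).+1) (g (nth z0 s (r + j * K)) - gbar) =
      \sum_(y <- sublist K r (nr r) s) (g y - gbar).
    rewrite (sublist_nth z0 K1 Hr') big_map -(big_mkord xpredT
      (fun j => g (nth z0 s (r + j * K)) - gbar)).
    by rewrite /index_iota subn0.
  rewrite Eb.
  have HMr := HM r.
  case Es : (sublist K r (nr r) s) HMr => [|z zs] HMr.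
    by rewrite big_nil enorm0 !addr_ge0 ?mulr_ge0 ?ler0n ?tt_ge0 ?(ltW G0) ?dm_ge0 ?(ltW cc_gt0).
  rewrite big_cons (sum_decomp z zs) addrA.
  apply: le_trans (enormD _ _) _; apply: lerD.
    apply: le_trans (enormD _ _) _; apply: lerD.
      apply: le_trans (enormD _ _) _; rewrite enormN.
      have := Hg z; have := gbar_norm; lra.
    exact: HMr.
  apply: le_trans (Bfun_norm _ _) _.
  have -> : size zs = nr r.
    move: Es; rewrite (sublist_nth z0 K1 Hr') => /(congr1 size).
    by rewrite size_map size_iota /= => -[].
  by [].
rewrite big_split /= sumr_const card_ord.
apply: le_trans (_ : kk * (2 * G + thr) + \sum_(r < K) n0 * (cc * dm) <= _).
  apply: lerD.
    by rewrite /kk [K%:R * _]mulr_natl.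
  apply: ler_sum => r _; apply: ler_wpM2r; last exact: nr_le.
  by rewrite mulr_ge0 ?dm_ge0 ?(ltW cc_gt0).
rewrite sumr_const card_ord -[_ *+ K]mulr_natl -/kk mulrA.
have -> : kk * n0 = nN by rewrite /n0 mulrCA mulfV ?mulr1 // lt0r_neq0 ?kk_gt0.
have h1 : nN * dm < 1 by apply: lt_trans Hd1; rewrite /nN /dm.
have h2 := kk_ge1.
have h3 := G0.
rewrite /cc.
nra.
Qed.

Lemma bound_num : (kk * thr + 4 * G * kk) / nN <=
  12 * G * Num.sqrt (kk / nN) * (1 + Num.sqrt L0) + 6 * G * kk / nN.
Proof.
have hn := nN_gt0; have hk := kk_gt0; have hL := L0_ge0.
rewrite mulrDl; apply: lerD; last first.
  by rewrite ler_pM2r ?invr_gt0 // ler_pM2r // ler_pM2r //; lra.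
set sx := Num.sqrt (kk / nN); set sL := Num.sqrt L0.
have sx0 : 0 <= sx by exact: sqrtr_ge0.
have sL0 : 0 <= sL by exact: sqrtr_ge0.
have sx2 : sx ^+ 2 = kk / nN by rewrite sqr_sqrtr // divr_ge0 ?ltW.
have sL2 : sL ^+ 2 = L0 by rewrite sqr_sqrtr.
have l0 : 0 <= kk * thr / nN.
  apply: divr_ge0; [apply: mulr_ge0; [exact: ltW | exact: tt_ge0] | exact: ltW].
have r0 : 0 <= 12 * G * sx * (1 + sL).
  apply: mulr_ge0; last lra.
  apply: mulr_ge0 => //; apply: mulr_ge0 => //; exact: ltW.
rewrite -(ler_pXn2r (n := 2)) // ?nnegrE //.
have -> : (kk * thr / nN) ^+ 2 = 128 * (G ^+ 2 * (kk / nN)) * (L0 + 1 / 16).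
  rewrite expr_div_n exprMn /thr sqr_sqrtr; last first.
    apply: mulr_ge0; last lra.
    apply: mulr_ge0; last by apply: divr_ge0; apply: ltW.
    by apply: mulr_ge0 => //; exact: sqr_ge0.
  by field; rewrite !lt0r_neq0.
have -> : (12 * G * sx * (1 + sL)) ^+ 2 = 144 * (G ^+ 2 * sx ^+ 2) * (1 + sL) ^+ 2 by ring.
rewrite sx2.
set Y := G ^+ 2 * (kk / nN).
have Y0 : 0 <= Y by rewrite mulr_ge0 ?sqr_ge0 // divr_ge0 ?ltW.
have h1 : 0 <= Y * sL by rewrite mulr_ge0.
rewrite -sL2; nra.
Qed.

Lemma path_prob_ge0 s : 0 <= path_prob nu P s.
Proof.
case: s => [|x s] /=; first exact: ler01.
by rewrite mulr_ge0 ?path_aux_ge0 //; case: Hnu.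
Qed.

Lemma core_bound B : (kk * thr + 4 * G * kk) / nN <= B ->
  sumseq N (fun s => path_prob nu P s *
    (~~ (eucl_norm (nN^-1 *: \sum_(i < N) g (nth z0 s i) - gbar) <= B))%R%:R) <= delta.
Proof.
move=> HB.
apply: le_trans (_ : sumseq N (fun s => path_prob nu P s * \sum_(r < K) Hr r s) <= _).
  apply: sumseq_le => s Hs; apply: ler_wpM2l; first exact: path_prob_ge0.
  have Hge : forall r, 0 <= Hr r s by move=> r; rewrite /Hr ler0n.
  set X := eucl_norm _.
  case: (leP X B) => h; first by apply: sumr_ge0 => r _.
  case: (pickP (fun r : 'I_K => thr < eucl_norm (Mof (sublist K r (nr r) s)))) => [r Hr0|Hnone].
    rewrite (bigD1 r) //= -[X in X <= _]addr0 lerD ?sumr_ge0 //.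
    by rewrite /Hr Hr0.
  exfalso; move: h; apply/negP; rewrite -leNgt.
  apply: le_trans HB; apply: determ => // r.
  by rewrite leNgt; apply/negP => h'; have := Hnone r; rewrite /= h'.
rewrite (sumseq_ext (G := fun s => \sum_(r < K) path_prob nu P s * Hr r s)); last first.
  by move=> s _; rewrite mulr_sumr.
rewrite sumseq_sum.
apply: le_trans (_ : \sum_(r < K) (delta / kk) <= _).
  by apply: ler_sum => r _; apply: per_r.
rewrite sumr_const card_ord -mulr_natl -/kk mulrC -mulrA mulVf ?mulr1 //.
exact: lt0r_neq0 kk_gt0.
Qed.

End Core.

Unset Implicit Arguments. Set Strict Implicit.

Lemma dotp_delta (R : realType) d (u : 'rV[R]_d) j : dotp u (delta_mx ord0 j) = u ord0 j.
Proof.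
rewrite /dotp (bigD1 j) //= big1 ?addr0; first by rewrite mxE !eqxx mulr1.
by move=> k /negbTE hk; rewrite mxE hk andbF mulr0.
Qed.

Lemma enorm0_eq (R : realType) d (v : 'rV[R]_d) : eucl_norm v <= 0 -> v = 0.
Proof.
move=> h.
have h0 : sqn v = 0.
  have := enorm_ge0 v => h1.
  have : eucl_norm v = 0 by apply/eqP; rewrite eq_le h h1.
  by move=> e; rewrite -enorm_sq e expr0n.
apply/matrixP => i j; rewrite (ord1 i) mxE.
move: h0 => /eqP; rewrite psumr_eq0 => [/allP H|k _]; last by rewrite sqr_ge0.
have : v ord0 j ^+ 2 == 0 by apply: (implyP (H j (mem_index_enum _))).
by rewrite sqrf_eq0 => /eqP.
Qed.

Theorem lemmaA5 (R : realType) (Omega : finType) (P : Omega -> Omega -> R)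
  (mu0 mu : Omega -> R) (d : nat) (Kset : set 'rV[R]_d)
  (f : Omega -> 'rV[R]_d -> R) (gradf : Omega -> 'rV[R]_d -> 'rV[R]_d)
  (gradF : 'rV[R]_d -> 'rV[R]_d) (G : R) (K N : nat) :
  stochastic P -> ergodic P -> is_distr mu0 -> stationary P mu ->
  (forall z w, differentiable (f z) w /\
     forall v, 'd (f z) w v = dotp (gradf z w) v) ->
  (forall w, differentiable (Fpop mu f) w /\
     forall v, 'd (Fpop mu f) w v = dotp (gradF w) v) ->
  (forall w z, Kset w -> eucl_norm (gradf z w) <= G) ->
  (1 <= K)%N -> (2 * K <= N)%N ->
  forall (delta : R), N%:R * dmix P mu K < delta ->
  forall (t : nat) (wt : seq nat -> seq Omega -> 'rV[R]_d),
  (1 <= t)%N ->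
  (forall ns xs, Kset (wt ns xs)) ->
  forall (ns : seq nat) (xs : seq Omega),
  size ns = t.-1 -> size xs = sumn ns ->
  0 < pNs R ns * path_prob mu0 P xs ->
  let deltat := delta - N%:R * dmix P mu K in
  let w := wt ns xs in
  1 - delta <=
  condP mu0 P ns xs
    (fun y : N.-tuple Omega =>
       eucl_norm (N%:R^-1 *: (\sum_(i < N) gradf (tnth y i) w) - gradF w)
       <= 12 * G * Num.sqrt (K%:R / N%:R) * (1 + Num.sqrt (ln (K%:R / deltat)))
          + 6 * G * K%:R / N%:R).
Proof.
move=> HP _ Hmu0 [Hmu _] Hf HF HG K1 KN delta Hd t wt _ Hwt ns xs _ _ Hpos.
cbv zeta.
set deltat := delta - _.
set w := wt ns xs.
set g := fun z => gradf z w.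
set B := 12 * G * _ * _ + _.
have EgF : gradF w = gbar mu g.
  have [_ eF] := HF w.
  have [_ esum] := @diff_sum_seq R Omega d mu f w (index_enum Omega) (fun z => (Hf z w).1).
  have Efp : Fpop mu f = (fun w => \sum_(z <- index_enum Omega) mu z * f z w) by [].
  apply/matrixP => i j; rewrite (ord1 i) -dotp_delta -eF Efp esum.
  rewrite /gbar summxE; apply: eq_bigr => z _.
  by rewrite (Hf z w).2 dotp_delta mxE.
have Hg : forall z, eucl_norm (g z) <= G by move=> z; apply: HG; exact: Hwt.
have [z0 _] : exists z : Omega, true.
  case: (pickP (fun _ : Omega => true)) => [z _|H]; first by exists z.
  by move: Hmu => [_]; rewrite big_pred0 // => /eqP; rewrite eq_sym oner_eq0.
pose nu := if xs is x :: xs' then P (last x xs') else mu0.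
have Hnu : is_distr nu by rewrite /nu; case: (xs) => [|x xs'] //; exact: HP.
have Hpp : forall y, path_prob mu0 P (xs ++ y) = path_prob mu0 P xs * path_prob nu P y.
  move=> y; rewrite /nu; case: (xs) => [|x xs'] /=; first by rewrite mul1r.
  case: y => [|y0 y'] /=; first by rewrite cats0 mulr1.
  by rewrite path_aux_cat /= mulrA.
set A := fun y : N.-tuple Omega => _ <= B.
have Econd : condP mu0 P ns xs A = \sum_(y : N.-tuple Omega | A y) path_prob nu P y.
  rewrite /condP; under eq_bigr do rewrite Hpp.
  rewrite -mulr_sumr mulrA mulrC mulrA mulVf ?mul1r //; exact: lt0r_neq0.
rewrite Econd.
have W0 : forall y : seq Omega, 0 <= path_prob nu P y := path_prob_ge0 HP Hnu.
have Htot : \sum_(y : N.-tuple Omega) path_prob nu P y = 1.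
  rewrite (sumseq_tuple N (fun s => path_prob nu P s)).
  have := path_prob_sum1 HP N.-1 Hnu.
  by have -> : N.-1.+1 = N by lia.
have Hsp : \sum_(y : N.-tuple Omega | A y) path_prob nu P y =
    1 - \sum_(y : N.-tuple Omega | ~~ A y) path_prob nu P y.
  by rewrite -Htot [in RHS](bigID A) /= addrK.
rewrite Hsp lerD2l lerN2.
have dm0 : 0 <= dmix P mu K := dmix_ge0 P mu K z0.
have Nd0 : 0 <= N%:R * dmix P mu K by rewrite mulr_ge0 ?ler0n.
have delta0 : 0 < delta by apply: le_lt_trans Hd.
have G0' : 0 <= G by apply: le_trans (Hg z0); exact: enorm_ge0.
case: (lerP 1 delta) => hd1.
  apply: le_trans hd1; rewrite -Htot [X in _ <= X](bigID A) /= lerDr.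
  by apply: sumr_ge0 => y _.
case: (eqVneq G 0) => [G00|Gn0].
  rewrite big1 ?ltW // => y; rewrite /A.
  have g0 : forall z, gradf z w = 0.
    by move=> z; apply: enorm0_eq; rewrite -G00; exact: Hg.
  have -> : gradF w = 0.
    by rewrite EgF /gbar big1 // => z _; rewrite /g g0 scaler0.
  rewrite big1 ?scaler0 ?subr0 ?enorm0; last by move=> i _; rewrite g0.
  by rewrite /B G00 !(mulr0, mul0r) addr0 lexx.
have Gp : 0 < G by rewrite lt0r Gn0.
pose A' := fun s : seq Omega =>
  eucl_norm (N%:R^-1 *: \sum_(i < N) g (nth z0 s i) - gbar mu g) <= B.
have EA : forall y : N.-tuple Omega, A y = A' y.
  move=> y; rewrite /A /A' EgF; congr (eucl_norm (_ *: _ - _) <= B).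
  by apply: eq_bigr => i _; rewrite (tnth_nth z0).
have -> : \sum_(y : N.-tuple Omega | ~~ A y) path_prob nu P y =
    \sum_(y : N.-tuple Omega) (fun s => path_prob nu P s * (~~ A' s)%:R) y.
  rewrite big_mkcond; apply: eq_bigr => y _; rewrite EA /=.
  by case: (A' y); rewrite /= ?mulr0 ?mulr1.
rewrite (sumseq_tuple N (fun s => path_prob nu P s * (~~ A' s)%:R)).
apply: (core_bound HP Hnu Hmu Hg Gp K1 KN Hd hd1 z0).
apply: le_trans (bound_num Gp K1 KN Hd hd1 z0) _.
rewrite /B lerD2r; apply: ler_wpM2l.
  apply: mulr_ge0; first by rewrite mulr_ge0 ?ltW.
  exact: sqrtr_ge0.
rewrite lerD2l; apply: ler_wsqrtr.
have dt0 : 0 < deltat by rewrite /deltat subr_gt0.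
have kp : 0 < K%:R :> R by rewrite ltr0n.
rewrite /L0 ler_ln ?posrE ?divr_gt0 //.
rewrite ler_pM2l // lef_pV2 ?posrE //.
rewrite /deltat; lra.
Qed.
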